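(* For every $n\ge0$ and $j=1,\dots,D-1$, $2n\le\deg R^{(j)}_n\le2n+D-2$.
   Context: Let $V$ be a real polynomial of even degree $D\ge2$ with leading coefficient $\gamma>0$. Contours: $\omega=e^{2\pi i/D}$, $C_0=[0,+\infty)$ oriented away from $0$, $C_k=\omega^kC_0$ oriented towards $0$, $\Gamma_k=C_0\cup C_k$ ($k=1,\dots,D-1$). On $\mathscr P^{\mathbb C}_{2n+D-2}$ (complex polynomials of degree $\le2n+D-2$) define $\alpha_j(P)=\int_{\mathbb R}e^{-2V(x)}x^jP(x)dx$ ($j=0,\dots,2n-1$) and $\beta_j(P)=-\frac1{2\pi i}\int_{\Gamma_j}e^{-V(x)}P(x)dx$ ($j=1,\dots,D-1$). $R^{(j)}_n$ is the unique polynomial in $\mathscr P^{\mathbb C}_{2n+D-2}$ with $\alpha_0(R^{(j)}_n)=\dots=\alpha_{2n-1}(R^{(j)}_n)=0$ and $\beta_k(R^{(j)}_n)=\delta_{kj}$ for $k=1,\dots,D-1$. *)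

(* Defs.v *)
From HB Require Import structures.
From mathcomp Require Import all_boot all_order all_algebra.
From mathcomp Require Import all_classical all_reals all_analysis.
From mathcomp Require Import complex.

Set Implicit Arguments.
Unset Strict Implicit.
Unset Printing Implicit Defensive.

Import Order.TTheory GRing.Theory Num.Theory.
Local Open Scope ring_scope.
Local Open Scope classical_set_scope.
Local Open Scope complex_scope.

Section OPDefs.
Variable R : realType.

Definition cexp (z : R[i]) : R[i] :=
  (expR (complex.Re z) * cos (complex.Im z)) +i* (expR (complex.Re z) * sin (complex.Im z)).

Definition cint (A : set R) (g : R -> R[i]) : R[i] :=
  (Rintegral (@lebesgue_measure R) A (fun x => complex.Re (g x)))
  +i* (Rintegral (@lebesgue_measure R) A (fun x => complex.Im (g x))).

Definition degV (V : {poly R}) : nat := (size V).-1.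

Definition cV (V : {poly R}) : {poly R[i]} := map_poly (real_complex R) V.

Definition omega (D : nat) : R[i] :=
  cexp (0 +i* (2 * pi / D%:R)).

Definition ray_int (c : R[i]) (f : R[i] -> R[i]) : R[i] :=
  c * cint `[0, +oo[ (fun t => f (c * t%:C)).

(* Gamma_k = C_0 ∪ C_k, with C_0 = [0,+oo) oriented away from 0 and
   C_k = omega^k C_0 oriented towards 0. *)
Definition Gamma_int (D k : nat) (f : R[i] -> R[i]) : R[i] :=
  ray_int 1 f - ray_int (omega D ^+ k) f.

Definition alphaF (V : {poly R}) (j : nat) (P : {poly R[i]}) : R[i] :=
  cint setT (fun x => (expR (- (2 * V.[x])))%:C * (x%:C) ^+ j * P.[x%:C]).

Definition betaF (V : {poly R}) (j : nat) (P : {poly R[i]}) : R[i] :=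
  - ((2 * pi)%:C * 'i)^-1 *
    Gamma_int (degV V) j (fun z => cexp (- (cV V).[z]) * P.[z]).

(* P satisfies the defining conditions of R^{(j)}_n:
   P in P^C_{2n+D-2}, alpha_0(P) = ... = alpha_{2n-1}(P) = 0,
   beta_k(P) = delta_{kj} for k = 1..D-1. *)
Definition is_Rnj (V : {poly R}) (n j : nat) (P : {poly R[i]}) : Prop :=
  [/\ (size P <= 2 * n + degV V - 1)%N,
      (forall k : nat, (k < 2 * n)%N -> alphaF V k P = 0)
    & (forall k : nat, (1 <= k <= degV V - 1)%N ->
         betaF V k P = if k == j then 1 else 0)].

End OPDefs.

(* Main.v *)
Require Import Defs.
From HB Require Import structures.
From mathcomp Require Import all_boot all_order all_algebra.
From mathcomp Require Import all_classical all_reals all_analysis.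
From mathcomp Require Import complex.
From mathcomp Require Import ring lra zify.
From mathcomp Require Import measurable_realfun.
Import Order.TTheory GRing.Theory Num.Theory.
Import numFieldNormedType.Exports.
Set Implicit Arguments.
Unset Strict Implicit.
Local Open Scope ring_scope.

Section Bounds.
Variable R : realType.
Implicit Types x : R.

Lemma abs_le_1x2 x : `|x| <= 1 + x ^+ 2.
Proof.
have h : 0 <= (`|x| - 2^-1) ^+ 2 by exact: sqr_ge0.
have -> : x ^+ 2 = `|x| ^+ 2 by rewrite real_normK ?num_real.
have a0 : 0 <= `|x| by [].
set t := `|x| in h a0 *.
rewrite sqrrB expr2 in h. nra.
Qed.

Lemma mono_le x i e : (i <= e)%N -> `|x| ^+ i <= (1 + x ^+ 2) ^+ e.
Proof.
move=> ie.
have h1 : 1 <= 1 + x ^+ 2 by rewrite lerDl sqr_ge0.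
apply: (@le_trans _ _ ((1 + x ^+ 2) ^+ i)).
  by apply: lerXn2r; rewrite ?inE ?nnegrE ?normr_ge0 ?abs_le_1x2 //; apply: le_trans h1.
exact: ler_weXn2l.
Qed.

Lemma poly_bound (Q : {poly R}) : exists K, 0 <= K /\
  forall x, `|Q.[x]| <= K * (1 + x ^+ 2) ^+ (size Q).
Proof.
exists (\sum_(i < size Q) `|Q`_i|); split.
  by apply: sumr_ge0 => i _.
move=> x; rewrite horner_coef mulr_suml.
apply: (le_trans (ler_norm_sum _ _ _)); apply: ler_sum => i _.
rewrite normrM normrX; apply: ler_wpM2l => //.
by apply: mono_le; apply: ltnW.
Qed.

Lemma exp_bound (a x : R) (e : nat) : 0 < a ->
  (1 + x ^+ 2) ^+ e <= (Num.max 1 a^-1) ^+ e * expR (e%:R * (a * x ^+ 2)).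
Proof.
move=> a0; set C := Num.max 1 a^-1.
have C1 : 1 <= C by rewrite le_max lexx.
have Ca : 1 <= C * a.
  have ha : a^-1 <= C by rewrite le_max lexx orbT.
  by have := ler_wpM2r (ltW a0) ha; rewrite mulVf ?gt_eqF.
have x2 : 0 <= x ^+ 2 by exact: sqr_ge0.
have h : 1 + x ^+ 2 <= C * expR (a * x ^+ 2).
  apply: (@le_trans _ _ (C * (1 + a * x ^+ 2))); last first.
    by apply: ler_wpM2l; [lra|exact: expR_ge1Dx].
  nra.
rewrite expRM_natl -exprMn; apply: lerXn2r => //; rewrite ?nnegrE; last lra.
all: try rewrite nnegrE; try lra.
Qed.

Lemma V_lower (V : {poly R}) : (2 <= degV V)%N -> ~~ odd (degV V) ->
  0 < lead_coef V -> exists C, forall x, lead_coef V / 2 * x ^+ 2 - C <= V.[x].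
Proof.
rewrite /degV => D2 Dev g0.
set D := (size V).-1 in D2 Dev *.
have sV : size V = D.+1 by move: D2; rewrite /D; case: (size V).
set g := lead_coef V in g0 *.
pose d := D.-1.
have Dd : D = d.+1 by rewrite /d; move: D2; clear; case: D.
set K := \sum_(i < D) `|V`_i|.
have K0 : 0 <= K by apply: sumr_ge0.
pose B := 2 * K / g.
have B0 : 0 <= B by rewrite /B divr_ge0 // ?mulr_ge0 // ltW.
exists (g / 2 + K * B ^+ d + K) => x.
set t := `|x|.
have t0 : 0 <= t by rewrite /t normr_ge0.
have xD : x ^+ D = t ^+ D by rewrite /t -normrX ger0_norm // exprn_even_ge0.
have hV : V.[x] = \sum_(i < D) V`_i * x ^+ i + g * x ^+ D.
  by rewrite horner_coef sV big_ord_recr /= /g lead_coefE sV.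
have hlow : `|\sum_(i < D) V`_i * x ^+ i| <= K * (1 + t ^+ d).
  rewrite /K mulr_suml.
  apply: (le_trans (ler_norm_sum _ _ _)); apply: ler_sum => i _.
  rewrite normrM normrX; apply: ler_wpM2l => //.
  have id : (i <= d)%N by rewrite -ltnS -Dd.
  have [t1|t1] := leP t 1.
    apply: (@le_trans _ _ 1); last by rewrite lerDl exprn_ge0.
    exact: exprn_ile1.
  apply: (@le_trans _ _ (t ^+ d)); last by rewrite lerDr.
  by apply: ler_weXn2l => //; apply: ltW.
have tD : t ^+ D = t * t ^+ d by rewrite Dd exprS.
have htd0 : 0 <= t ^+ d by exact: exprn_ge0.
have key : - (K * B ^+ d) <= g / 2 * (t * t ^+ d) - K * t ^+ d.
  have [tB|tB] := leP B t.
    have : K <= g / 2 * t.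
      have -> : K = g / 2 * B by rewrite /B; field; apply/lt0r_neq0.
      by apply: ler_wpM2l => //; apply: divr_ge0 => //; apply: ltW.
    have : 0 <= K * B ^+ d by apply: mulr_ge0 => //; exact: exprn_ge0.
    nra.
  have : t ^+ d <= B ^+ d by apply: lerXn2r => //; apply: ltW.
  have : 0 <= g / 2 * t by apply: mulr_ge0 => //; apply: divr_ge0 => //; apply: ltW.
  nra.
have hx2 : x ^+ 2 - 1 <= t ^+ D.
  have -> : x ^+ 2 = t ^+ 2 by rewrite /t real_normK ?num_real.
  have [t1|t1] := leP 1 t.
    by have := ler_weXn2l t1 D2; lra.
  have : t ^+ 2 <= 1 by apply: exprn_ile1 => //; apply: ltW.
  have : 0 <= t ^+ D by exact: exprn_ge0.
  lra.
move: hlow; rewrite ler_norml => /andP[hl _].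
rewrite hV xD.
have g2 : 0 < g / 2 by apply: divr_gt0.
have : g / 2 * (x ^+ 2 - 1) <= g / 2 * t ^+ D by apply: ler_wpM2l => //; apply: ltW.
rewrite tD in hx2 * => h2.
nra.
Qed.

Definition wf (V : {poly R}) (x : R) := expR (- (2 * V.[x])).

Lemma cont_w (V : {poly R}) : continuous (wf V).
Proof.
move=> x; rewrite /wf.
apply: continuous_comp; last exact: continuous_expR.
apply: (@cvgN _ R^o); apply: cvgM; first exact: cvg_cst.
exact: continuous_horner.
Qed.

Lemma cont_wQ (V Q : {poly R}) : continuous (fun x => wf V x * Q.[x]).
Proof.
move=> x; apply: cvgM; [exact: cont_w | exact: continuous_horner].
Qed.

Lemma meas_wQ (V Q : {poly R}) :
  measurable_fun [set: R] (fun x : R => (wf V x * Q.[x])%:E).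
Proof. by apply/measurable_EFinP; apply: continuous_measurable_fun; exact: cont_wQ. Qed.

Lemma int_wQ (V Q : {poly R}) : (2 <= degV V)%N -> ~~ odd (degV V) ->
  0 < lead_coef V ->
  lebesgue_measure.-integrable [set: R] (fun x : R => (wf V x * Q.[x])%:E).
Proof.
move=> D2 Dev g0.
have [C hC] := V_lower D2 Dev g0.
have [K [K0 hK]] := poly_bound Q.
set g := lead_coef V in g0 hC.
set e := size Q in hK.
pose a := g / 2 / e.+1%:R.
have e0 : 0 < e.+1%:R :> R by rewrite ltr0n.
have a0 : 0 < a by rewrite /a !divr_gt0.
have ea : e%:R * a <= g / 2.
  have h1 : e%:R / e.+1%:R <= 1 :> R by rewrite ler_pdivrMr // mul1r ler_nat.
  have -> : e%:R * a = g / 2 * (e%:R / e.+1%:R) by rewrite /a; field; apply/lt0r_neq0.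
  by apply: ler_piMr => //; rewrite divr_ge0 // ltW.
pose Cm := Num.max 1 a^-1.
have Cm0 : 0 <= Cm by rewrite le_max ler01.
pose s := Num.sqrt g^-1.
have s0 : s != 0 by rewrite /s sqrtr_eq0 -ltNge invr_gt0.
have s2 : s ^+ 2 = g^-1 by rewrite /s sqr_sqrtr // invr_ge0 ltW.
have pk : 0 < normal_peak s by exact: normal_peak_gt0.
pose M := expR (2 * C) * K * Cm ^+ e / normal_peak s.
have M0 : 0 <= M by rewrite /M !mulr_ge0 ?expR_ge0 ?exprn_ge0 // invr_ge0 ltW.
eapply le_integrable; last first.
- by apply: (integrableZl _ M) => //; exact: (integrable_normal_pdf 0 s).
- move=> x _ /=; rewrite lee_fin.
  rewrite [X in _ <= X]ger0_norm; last by rewrite mulr_ge0 // normal_pdf_ge0.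
  rewrite /normal_pdf (negbTE s0) /normal_fun subr0 s2.
  have -> : M * (normal_peak s * expR (- x ^+ 2 / (g^-1 *+ 2))) =
     expR (2 * C) * K * Cm ^+ e * expR (- (g / 2 * x ^+ 2)).
    have -> : - x ^+ 2 / (g^-1 *+ 2) = - (g / 2 * x ^+ 2).
      by rewrite -mulr_natr; field; apply/lt0r_neq0.
    by rewrite /M; field; apply/lt0r_neq0.
  rewrite normrM ger0_norm ?expR_ge0 //.
  apply: (@le_trans _ _ (wf V x * (K * (Cm ^+ e * expR (e%:R * (a * x ^+ 2)))))).
    apply: ler_wpM2l; first exact: expR_ge0.
    apply: (le_trans (hK x)); apply: ler_wpM2l => //; exact: exp_bound.
  have hw : wf V x <= expR (2 * C - g * x ^+ 2).
    by rewrite /wf ler_expR; have := hC x; lra.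
  have hE : expR (2 * C - g * x ^+ 2) * expR (e%:R * (a * x ^+ 2)) <=
            expR (2 * C) * expR (- (g / 2 * x ^+ 2)).
    rewrite -!expRD ler_expR.
    have : 0 <= x ^+ 2 by exact: sqr_ge0.
    have : e%:R * a * x ^+ 2 <= g / 2 * x ^+ 2 by apply: ler_wpM2r => //; exact: sqr_ge0.
    rewrite -mulrA; nra.
  have KC : 0 <= K * Cm ^+ e by rewrite mulr_ge0 // exprn_ge0.
  apply: (@le_trans _ _ (expR (2 * C - g * x ^+ 2) * (K * (Cm ^+ e * expR (e%:R * (a * x ^+ 2)))))).
    by apply: ler_wpM2r => //; rewrite !mulr_ge0 ?exprn_ge0 ?expR_ge0.
  have -> : expR (2 * C - g * x ^+ 2) * (K * (Cm ^+ e * expR (e%:R * (a * x ^+ 2)))) =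
     K * Cm ^+ e * (expR (2 * C - g * x ^+ 2) * expR (e%:R * (a * x ^+ 2))) by ring.
  have -> : expR (2 * C) * K * Cm ^+ e * expR (- (g / 2 * x ^+ 2)) =
     K * Cm ^+ e * (expR (2 * C) * expR (- (g / 2 * x ^+ 2))) by ring.
  exact: ler_wpM2l.
- exact: meas_wQ.
- exact: measurableT.
Qed.

Local Open Scope complex_scope.

Definition Iw (V Q : {poly R}) : R :=
  Rintegral lebesgue_measure [set: R] (fun x => wf V x * Q.[x]).

Section Lin.
Variable V : {poly R}.
Hypotheses (D2 : (2 <= degV V)%N) (Dev : ~~ odd (degV V)) (g0 : 0 < lead_coef V).

Lemma Iw0 : Iw V 0 = 0.
Proof.
rewrite /Iw; under eq_Rintegral do rewrite horner0 mulr0.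
by rewrite Rintegral_cst ?mul0r //; exact: measurableT.
Qed.

Lemma IwD Q1 Q2 : Iw V (Q1 + Q2) = Iw V Q1 + Iw V Q2.
Proof.
rewrite /Iw -RintegralD //; last exact: int_wQ.
  by apply: eq_Rintegral => x _; rewrite hornerD mulrDr.
exact: int_wQ.
Qed.

Lemma IwZ c Q : Iw V (c *: Q) = c * Iw V Q.
Proof.
rewrite /Iw -RintegralZl //; last exact: int_wQ.
by apply: eq_Rintegral => x _; rewrite hornerZ mulrCA.
Qed.

Lemma Iw_sum m (F : 'I_m -> {poly R}) :
  Iw V (\sum_(i < m) F i) = \sum_(i < m) Iw V (F i).
Proof.
apply: (big_ind2 (fun P r => Iw V P = r)); first exact: Iw0.
  by move=> a b c d ha hc; rewrite IwD ha hc.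
by [].
Qed.

Lemma Iw_sq (A : {poly R}) :
  Iw V (A * A) = \sum_(i < size A) A`_i * Iw V ('X^i * A).
Proof.
have -> : A * A = \sum_(i < size A) A`_i *: ('X^i * A).
  rewrite -{1}[A]coefK poly_def mulr_suml; apply: eq_bigr => i _.
  by rewrite scalerAl.
by rewrite Iw_sum; apply: eq_bigr => i _; rewrite IwZ.
Qed.

End Lin.

Local Notation cRe := (@complex.Re R).
Local Notation cIm := (@complex.Im R).

Lemma size_mapRe (f : R[i] -> R) (P : {poly R[i]}) : (size (map_poly f P) <= size P)%N.
Proof. exact: size_poly. Qed.

Lemma Re_sum m (F : 'I_m -> R[i]) :
  cRe (\sum_(i < m) F i) = \sum_(i < m) cRe (F i).
Proof.
elim: m F => [|m IH] F; first by rewrite !big_ord0.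
rewrite !big_ord_recr /= -IH; by case: (\sum_(i < m) _) => a b; case: (F ord_max).
Qed.

Lemma Im_sum m (F : 'I_m -> R[i]) :
  cIm (\sum_(i < m) F i) = \sum_(i < m) cIm (F i).
Proof.
elim: m F => [|m IH] F; first by rewrite !big_ord0.
rewrite !big_ord_recr /= -IH; by case: (\sum_(i < m) _) => a b; case: (F ord_max).
Qed.

Lemma ReCM (r : R) (z : R[i]) : cRe (r%:C * z) = r * cRe z.
Proof. by case: z => a b /=; ring. Qed.

Lemma ImCM (r : R) (z : R[i]) : cIm (r%:C * z) = r * cIm z.
Proof. by case: z => a b /=; ring. Qed.

Lemma Re_horner (P : {poly R[i]}) (x : R) :
  cRe P.[x%:C] = (map_poly cRe P).[x].
Proof.
rewrite horner_coef (horner_coef_wide _ (size_mapRe _ P)) Re_sum.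
apply: eq_bigr => i _; rewrite coef_map_id0 // -rmorphXn mulrC ReCM mulrC //.
Qed.

Lemma Im_horner (P : {poly R[i]}) (x : R) :
  cIm P.[x%:C] = (map_poly cIm P).[x].
Proof.
rewrite horner_coef (horner_coef_wide _ (size_mapRe _ P)) Im_sum.
apply: eq_bigr => i _; rewrite coef_map_id0 // -rmorphXn mulrC ImCM mulrC //.
Qed.

Lemma alpha_Re V k P : cRe (alphaF V k P) = Iw V ('X^k * map_poly cRe P).
Proof.
rewrite /alphaF /cint /=; apply: eq_Rintegral => x _.
by rewrite -rmorphXn -rmorphM ReCM Re_horner hornerM hornerXn /wf mulrA.
Qed.

Lemma alpha_Im V k P : cIm (alphaF V k P) = Iw V ('X^k * map_poly cIm P).
Proof.
rewrite /alphaF /cint /=; apply: eq_Rintegral => x _.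
by rewrite -rmorphXn -rmorphM ImCM Im_horner hornerM hornerXn /wf mulrA.
Qed.

Lemma Iw_sq_gt0 (V A : {poly R}) : (2 <= degV V)%N -> ~~ odd (degV V) ->
  0 < lead_coef V -> A != 0 -> 0 < Iw V (A * A).
Proof.
move=> D2 Dev g0 A0.
have [x0 hx0] : exists x0, A.[x0] != 0.
  case: (pselect (exists x0, A.[x0] != 0)) => // hn; exfalso.
  have hall : forall x, A.[x] = 0.
    by move=> x; apply/eqP/negPn/negP => hx; apply: hn; exists x.
  pose rs := [seq (i%:R : R) | i <- iota 0 (size A)].
  have : (size rs < size A)%N.
    apply: max_poly_roots => //.
      by apply/allP => y _; rewrite /root hall.
    by rewrite map_inj_uniq ?iota_uniq // => a b /eqP; rewrite eqr_nat => /eqP.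
  by rewrite size_map size_iota ltnn.
pose f := fun x => wf V x * (A * A).[x].
have f0 : forall x, 0 <= f x.
  by move=> x; rewrite /f hornerM mulr_ge0 ?expR_ge0 // -expr2 sqr_ge0.
have fx0 : 0 < f x0.
  rewrite /f hornerM mulr_gt0 ?expR_gt0 //.
  by rewrite lt0r mulf_neq0 //= -expr2 sqr_ge0.
set c := f x0 / 2.
have c0 : 0 < c by rewrite /c divr_gt0.
have cf : c < f x0 by rewrite /c ltr_pdivrMr // ltr_pMr // ltr1n.
have := cvgr_gt (f x0) (@cont_wQ V (A * A) x0) c cf.
move=> hnear; have := (proj1 (nbhs_ballP x0 _)) (hnear _); case=> r /= r0 hr.
have intf := @int_wQ V (A * A) D2 Dev g0.
rewrite /Iw /Rintegral; apply: fine_gt0; apply/andP; split; last first.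
  have := integrable_fin_num measurableT intf.
  by rewrite fin_numE => /andP[_ /eqP]; rewrite ltey => /eqP.
apply: (@lt_le_trans _ _ ((c * (r *+ 2))%:E)).
  by rewrite lte_fin mulr_gt0 // pmulrn_lgt0.
apply: (@le_trans _ _ (\int[lebesgue_measure]_(x in [set: R]) (c * \1_(ball x0 r) x)%:E)%E).
  under eq_integral do rewrite EFinM.
  rewrite ge0_integralZl. all: try (by rewrite lee_fin ltW). all: try exact: measurableT.
  - rewrite integral_indic; last 2 first.
      + exact: measurableT.
      + exact: measurable_ball.
    rewrite setIT (_ : _ (ball x0 r) = (r *+ 2)%:E) ?EFinM //; exact: lebesgue_measure_ball (ltW r0).
  - apply/measurable_EFinP; exact: measurable_indic (measurable_ball _ _).
  - by move=> x _; rewrite lee_fin indicE.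
apply: ge0_le_integral => //.
- by move=> x _; rewrite lee_fin mulr_ge0 // ?ltW // indicE.
- apply/measurable_EFinP; apply: measurable_funM => //.
  exact: measurable_indic (measurable_ball _ _).
- exact: meas_wQ.
move=> x _; rewrite lee_fin indicE.
have [hx|hx] := pselect (ball x0 r x).
  by rewrite mem_set // mulr1; apply: ltW; exact: hr.
by rewrite memNset // mulr0; exact: f0.
Qed.


Lemma cint0 (A : set R) : measurable A -> cint A (fun _ => 0) = 0.
Proof.
move=> mA; rewrite /cint.
rewrite !Rintegral_cst //.
have e1 : cRe 0 = 0 := erefl. have e2 : cIm 0 = 0 := erefl.
by rewrite e1 ?e2 !mul0r.
Qed.

Lemma beta0 (V : {poly R}) (k : nat) : betaF V k 0 = 0.
Proof.
have h : forall c, ray_int c (fun z => cexp (- (cV V).[z]) * (0 : {poly R[i]}).[z]) = 0.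
  move=> c; rewrite /ray_int.
  rewrite (_ : (fun t : R => _) = fun _ => 0); first by rewrite cint0 ?mulr0 //; exact: measurable_itv.
  by apply: funext => t; rewrite horner0 mulr0.
by rewrite /betaF /Gamma_int !h subrr mulr0.
Qed.

End Bounds.

Theorem mainTheorem11 (R : realType) (V : {poly R}) (n j : nat) :
  (2 <= degV V)%N -> ~~ odd (degV V) -> 0 < lead_coef V ->
  (1 <= j <= degV V - 1)%N ->
  forall P : {poly R[i]}, is_Rnj V n j P ->
  (2 * n <= (size P).-1 <= 2 * n + degV V - 2)%N.
Proof.
move=> D2 Dev g0 hj P [hsz halpha hbeta].
apply/andP; split; last by move: hsz D2; clear; lia.
rewrite leqNgt; apply/negP => hlt.
have hs : (size P <= 2 * n)%N by move: hlt; clear; lia.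
have hA : forall (f : R[i] -> R), f 0 = 0 ->
    (forall k, Iw V ('X^k * map_poly f P) = f (alphaF V k P)) ->
    map_poly f P = 0.
  move=> f f0 hf; apply/eqP/negP => /negP hA0.
  have := Iw_sq_gt0 D2 Dev g0 hA0.
  rewrite (Iw_sq D2 Dev g0) big1 ?ltxx // => i _.
  rewrite hf halpha ?f0 ?mulr0 //.
  exact: leq_trans (ltn_ord i) (leq_trans (size_mapRe f P) hs).
have hRe := hA (@complex.Re R) erefl (fun k => esym (alpha_Re V k P)).
have hIm := hA (@complex.Im R) erefl (fun k => esym (alpha_Im V k P)).
have P0 : P = 0.
  apply/polyP => i; rewrite coef0.
  have := congr1 (fun q : {poly R} => q`_i) hRe; have := congr1 (fun q : {poly R} => q`_i) hIm.
  rewrite /= !coef_map_id0 // coef0.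
  by case: (P`_i) => a b /= -> ->.
have := hbeta j hj; rewrite eqxx P0 beta0 => /eqP.
by rewrite eq_sym oner_eq0.
Qed.
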